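(* Let $(\Delta,\mathcal{D},\mathbb{P})$ be a probability space, $\mathcal{Z}$ a set, and $M_m:\Delta^m\to\mathcal{Z}$, $m=0,1,2,\ldots$, a family of maps ($M_0$ being the decision returned for the empty list). For each $\delta\in\Delta$ let $\mathcal{Z}'_\delta\subseteq\mathcal{Z}$ and $\mathcal{Z}''_\delta\subseteq\mathcal{Z}$ be given sets. Assume that the maps $M_m$ are consistent with respect to $\{\mathcal{Z}'_\delta\}$, i.e., for all integers $m\ge 0$, $n>0$ and all $\delta_1,\ldots,\delta_{m+n}\in\Delta$: (i) (permutation invariance) $M_m(\delta_1,\ldots,\delta_m)=M_m(\delta_{i_1},\ldots,\delta_{i_m})$ for every permutation $(i_1,\ldots,i_m)$ of $(1,\ldots,m)$; (ii) (confirmation under appropriateness) if $M_m(\delta_1,\ldots,\delta_m)\in\mathcal{Z}'_{\delta_{m+i}}$ for all $i\in\{1,\ldots,n\}$, then $M_{m+n}(\delta_1,\ldots,\delta_{m+n})=M_m(\delta_1,\ldots,\delta_m)$; (iii) (responsiveness to inappropriateness) if $M_m(\delta_1,\ldots,\delta_m)\notin\mathcal{Z}'_{\delta_{m+i}}$ for some $i\in\{1,\ldots,n\}$, then $M_{m+n}(\delta_1,\ldots,\delta_{m+n})\neq M_m(\delta_1,\ldots,\delta_m)$. Define the instrumental maps $M^+_m:\Delta^m\to\mathcal{Z}\times\mathbb{N}$ by $M^+_m(\delta_1,\ldots,\delta_m)=(z^*_m,c^*_m)$, where $z^*_m=M_m(\delta_1,\ldots,\delta_m)$ and $c^*_m=\#\{i\in\{1,\ldots,m\}: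 z^*_m\notin\mathcal{Z}''_{\delta_i}\}$, and for each $\delta$ set $\mathcal{Z}^+_\delta:=(\mathcal{Z}'_\delta\times\mathbb{N})\cap(\mathcal{Z}''_\delta\times\mathbb{N})$. Then the maps $M^+_m$ satisfy conditions (i), (ii), (iii) above with $M_m$ replaced by $M^+_m$ (and $M_{m+n}$ by $M^+_{m+n}$) and $\mathcal{Z}'_{\delta_{m+i}}$ replaced by $\mathcal{Z}^+_{\delta_{m+i}}$.
   Context: $\mathbb{N}$ denotes the set of non-negative integers and $\#$ denotes cardinality. $\mathcal{Z}'_\delta$ is interpreted as the set of decisions that are ''baseline appropriate'' for scenario $\delta$, and $\mathcal{Z}''_\delta$ as the set of decisions that are ''post-design appropriate'' for $\delta$; no consistency assumption is made with respect to $\mathcal{Z}''_\delta$. *)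

(* Defs.v *)
From HB Require Import structures.
From mathcomp Require Import all_boot all_order all_algebra all_fingroup.
From mathcomp Require Import all_classical all_reals all_analysis.
Set Implicit Arguments. Unset Strict Implicit. Unset Printing Implicit Defensive.
Local Open Scope classical_set_scope.

Definition consistent (Delta T : Type) (M : forall m : nat, ('I_m -> Delta) -> T)
  (Zp : Delta -> set T) : Prop :=
  (forall (m : nat) (d : 'I_m -> Delta) (s : 'S_m),
      M m (fun i => d (s i)) = M m d) /\
  (forall (m n : nat) (d : 'I_(m + n) -> Delta), (0 < n)%N ->
      (forall i : 'I_n, Zp (d (rshift m i)) (M m (fun j => d (lshift n j)))) ->
      M (m + n)%N d = M m (fun j => d (lshift n j))) /\
  (forall (m n : nat) (d : 'I_(m + n) -> Delta), (0 < n)%N ->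
      (exists i : 'I_n, ~ Zp (d (rshift m i)) (M m (fun j => d (lshift n j)))) ->
      M (m + n)%N d <> M m (fun j => d (lshift n j))).

Definition Mplus (Delta Z : Type) (M : forall m : nat, ('I_m -> Delta) -> Z)
  (Z2 : Delta -> set Z) : forall m : nat, ('I_m -> Delta) -> Z * nat :=
  fun m d => (M m d, #|[set i : 'I_m | ~~ `[< Z2 (d i) (M m d) >] ]|%N).

Definition Zplus (Delta Z : Type) (Z1 Z2 : Delta -> set Z) (delta : Delta)
  : set (Z * nat) :=
  (Z1 delta `*` [set: nat]) `&` (Z2 delta `*` [set: nat]).

(* Main.v *)
Require Import Defs.
From HB Require Import structures.
From mathcomp Require Import all_boot all_order all_algebra all_fingroup.
From mathcomp Require Import all_classical all_reals all_analysis.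
Local Open Scope classical_set_scope.

Lemma cardE' (T : finType) (p : T -> bool) : (#|[set i : T | p i]| = \sum_(i : T) (p i : nat))%N.
Proof.
rewrite -sum1_card big_mkcond /=; apply: eq_bigr => i _.
rewrite (_ : (i \in _) = p i); first by case: (p i).
apply/idP/idP => [/set_mem|] /=; last by move=> h; apply/mem_set. done.
Qed.


Lemma card_split m n (p : 'I_(m+n) -> bool) : #|[set i | p i]| =
  (#|[set j : 'I_m | p (lshift n j)]| + #|[set k : 'I_n | p (rshift m k)]|)%N.
Proof. by rewrite !cardE' big_split_ord. Qed.

Lemma card_perm m (s : 'S_m) (p : 'I_m -> bool) :
  #|[set i | p (s i)]| = #|[set i | p i]|.
Proof.
rewrite !cardE' [RHS](reindex_inj (@perm_inj _ s)) //.
Qed.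

Theorem lemma1 (R : realType) (dd : measure_display) (Delta : measurableType dd)
  (P : probability Delta R) (Z : Type)
  (M : forall m : nat, ('I_m -> Delta) -> Z) (Z1 Z2 : Delta -> set Z) :
  consistent M Z1 -> consistent (Mplus M Z2) (Zplus Z1 Z2).
Proof.
move=> [Hi [Hii Hiii]]; split; [|split].
- move=> m d s; rewrite /Mplus Hi; congr pair.
  by rewrite !cardE' [RHS](reindex_inj (@perm_inj _ s)).
- move=> m n d n0 H.
  have E : M (m + n)%N d = M m (fun j => d (lshift n j)).
    apply: Hii => // i; by case: (H i) => [[? _] [? _]].
  rewrite /Mplus E; congr pair.
  rewrite card_split !cardE' [X in (_ + X)%N]big1 ?addn0 // => k _.
  by case: (H k) => _ [h _]; case: asboolP.
- move=> m n d n0 [i Hn].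
  have [[k Hk]|Hall] := pselect (exists k : 'I_n, ~ Z1 (d (rshift m k)) (M m (fun j => d (lshift n j)))).
    by rewrite /Mplus => -[] /(Hiii m n d n0) h _; apply: h; exists k.
  have Hall' : forall k : 'I_n, Z1 (d (rshift m k)) (M m (fun j => d (lshift n j))).
    by move=> k; apply: contrapT => hk; apply: Hall; exists k.
  have E := Hii m n d n0 Hall'.
  have N2 : ~ Z2 (d (rshift m i)) (M m (fun j => d (lshift n j))).
    by move=> h2; apply: Hn; split; split.
  rewrite /Mplus E => -[] /eqP; rewrite card_split -{2}[#|_|]addn0 eqn_add2l.
  rewrite !cardE' (bigD1 i) //= (_ : ~~ _ = true) //; by apply/negP => /asboolP.
Qed.
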